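(* Let $\mathcal{A}$ be a topological ring, let $\mathcal{B}$ be a separated topological ring with separated completion $c\colon\mathcal{B}\to\widehat{\mathcal{B}}$, and let $h_n\colon\mathcal{A}\to\mathcal{B}$, $n\in\mathbb{N}$, be a sequence of group homomorphisms which converges pointwise to the zero homomorphism. Then the map $s\colon\mathcal{A}\to\widehat{\mathcal{B}}\{T\}$, $a\mapsto\sum_{n\in\mathbb{N}}c(h_n(a))T^n$, is a well-defined group homomorphism, and the following are equivalent: (a) $s$ is continuous; (b) every $h_n$ is continuous and the sequence $(h_n)_n$ converges continuously to the zero homomorphism.
   Context: Topological rings are linearly topologized with a countable fundamental system of open ideals; separated means Hausdorff; the separated completion is $\widehat{\mathcal{B}}=\varprojlim_{\mathfrak{b}}\mathcal{B}/\mathfrak{b}$ over open ideals (quotients discrete) with the inverse limit topology and canonical map $c$. For the complete ring $\widehat{\mathcal{B}}$, $\widehat{\mathcal{B}}\{T\}$ is the ring of restricted power series $\sum b_nT^n$ with $b_n\to0$ in $\widehat{\mathcal{B}}$, topologized by the ideals of series with all coefficients in a given open ideal. $(h_n)$ converges pointwise to $0$ if for every $a$ and open ideal $\mathfrak{b}$ there is $n_0$ with $h_n(a)\in\mathfrak{b}$ for $n\ge n_0$; it converges continuously to $0$ if every $h_n$ is continuous and for every $a$ and open ideal $\mathfrak{b}'$ of $\mathcal{B}$ there exist an open ideal $\mathfrak{a}$ of $\mathcal{A}$ and $n_0$ with $h_n(a+x)\in\mathfrak{b}'$ for all $x\in\mathfrak{a}$, $n\ge n_0$. *)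

(* Defs.v *)
From mathcomp Require Import all_boot all_algebra.
From mathcomp Require Import boolp classical_sets.
Set Implicit Arguments. Unset Strict Implicit. Unset Printing Implicit Defensive.
Import GRing.Theory.
Local Open Scope ring_scope.

Definition is_ideal (R : comPzRingType) (I : set R) : Prop :=
  [/\ I 0, (forall x y, I x -> I y -> I (x - y))
    & (forall r x, I x -> I (r * x))].

(* A countable fundamental system of open ideals for a linear topology on R:
   a nat-indexed family of ideals which is a filter base. *)
Definition fundamental_system (R : comPzRingType) (I : nat -> set R) : Prop :=
  (forall n, is_ideal (I n)) /\
  (forall m n, exists k, forall x, I k x -> I m x /\ I n x).

Definition open_ideal (R : comPzRingType) (I : nat -> set R) (b : set R) :
  Prop := is_ideal b /\ exists n, forall x, I n x -> b x.

Definition separated (R : comPzRingType) (I : nat -> set R) : Prop :=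
  forall y : R, (forall b, open_ideal I b -> b y) -> y = 0.

Definition OI (R : comPzRingType) (I : nat -> set R) : Type :=
  {b : set R | open_ideal I b}.

(* The coset y + b, i.e. the class of y in R/b. *)
Definition coset (R : comPzRingType) (b : set R) (y : R) : set R :=
  fun z : R => exists2 t, b t & z = y + t.

(* Elements of the separated completion  lim_{b open} R/b : compatible families
   assigning to each open ideal b a class of R/b (a coset of b). *)
Definition compl_elt (R : comPzRingType) (I : nat -> set R)
    (x : OI I -> set R) : Prop :=
  (forall b : OI I, exists y, x b = coset (sval b) y) /\
  (forall b b' : OI I, (forall z, sval b z -> sval b' z) ->
      forall z, x b z -> x b' z).

Definition ccan (R : comPzRingType) (I : nat -> set R) (y : R) : OI I -> set R :=
  fun b => coset (sval b) y.

Definition czero (R : comPzRingType) (I : nat -> set R) : OI I -> set R :=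
  fun b => coset (sval b) 0.
Definition cadd (R : comPzRingType) (I : nat -> set R)
    (x y : OI I -> set R) : OI I -> set R :=
  fun b => fun z : R => exists p q : R, [/\ x b p, y b q & z = p + q].

(* Fundamental system of open neighbourhoods of 0 in R^ for the inverse limit
   topology (quotients discrete): kernels of the projections R^ -> R/b. *)
Definition ker_proj (R : comPzRingType) (I : nat -> set R) (b : OI I) :
  set (OI I -> set R) := fun x => compl_elt x /\ x b = czero b.

(* Restricted power series over R^: coefficient sequences tending to 0. *)
Definition restricted (R : comPzRingType) (I : nat -> set R)
    (u : nat -> OI I -> set R) : Prop :=
  (forall n, compl_elt (u n)) /\
  (forall b : OI I, exists n0, forall n, (n0 <= n)%N -> ker_proj b (u n)).

Definition sadd (R : comPzRingType) (I : nat -> set R)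
    (u v : nat -> OI I -> set R) : nat -> OI I -> set R :=
  fun n => cadd (u n) (v n).

(* Fundamental system of open neighbourhoods of 0 in R^{T}: series all of whose
   coefficients lie in the open ideal ker_proj b of R^. *)
Definition rs_nbhd0 (R : comPzRingType) (I : nat -> set R) (b : OI I) :
  set (nat -> OI I -> set R) :=
  fun w => restricted w /\ forall n, ker_proj b (w n).

Definition sser (A B : comPzRingType) (IB : nat -> set B)
    (h : nat -> A -> B) (a : A) : nat -> OI IB -> set B :=
  fun n => @ccan B IB (h n a).

Definition hcontinuous (A B : comPzRingType) (IA : nat -> set A)
    (IB : nat -> set B) (f : A -> B) : Prop :=
  forall (a : A) (b' : set B), open_ideal IB b' ->
    exists2 aa : set A, open_ideal IA aa &
      forall x, aa x -> b' (f (a + x) - f a).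

Definition scontinuous (A B : comPzRingType) (IA : nat -> set A)
    (IB : nat -> set B) (s : A -> nat -> OI IB -> set B) : Prop :=
  forall (a : A) (b : OI IB),
    exists2 aa : set A, open_ideal IA aa &
      forall x, aa x -> exists2 w, rs_nbhd0 b w & s (a + x) = sadd (s a) w.

Definition pointwise_cvg0 (A B : comPzRingType) (IB : nat -> set B)
    (h : nat -> A -> B) : Prop :=
  forall (a : A) (b : set B), open_ideal IB b ->
    exists n0, forall n, (n0 <= n)%N -> b (h n a).

Definition continuous_cvg0 (A B : comPzRingType) (IA : nat -> set A)
    (IB : nat -> set B) (h : nat -> A -> B) : Prop :=
  (forall n, hcontinuous IA IB (h n)) /\
  forall (a : A) (b' : set B), open_ideal IB b' ->
    exists2 aa : set A, open_ideal IA aa &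
      exists n0, forall x n, aa x -> (n0 <= n)%N -> b' (h n (a + x)).

Arguments ccan {R} I y.
Arguments czero {R} I.
Arguments sser {A B} IB h a.

(* Main.v *)
Require Import Defs.
From mathcomp Require Import all_boot all_algebra.
From mathcomp Require Import boolp classical_sets.
Import GRing.Theory.
Local Open Scope ring_scope.

Section Aux.
Variable R : comPzRingType.

Lemma idN (b : set R) : is_ideal b -> forall y, b y -> b (- y).
Proof. case=> h0 hB _ y hy; have := hB _ _ h0 hy; by rewrite sub0r. Qed.

Arguments idN {b} _ {y}.
Lemma idD (b : set R) : is_ideal b -> forall x y, b x -> b y -> b (x + y).
Proof.
move=> hb x y hx hy; have hN := idN hb hy; case: hb => _ hB _.
by have := hB _ _ hx hN; rewrite opprK.
Qed.

Arguments idD {b} _ {x y}.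
Lemma idB (b : set R) : is_ideal b -> forall x y, b x -> b y -> b (x - y).
Proof. by case. Qed.

Arguments idB {b} _ {x y}.
Lemma coset_eq (b : set R) : is_ideal b -> forall y y', b (y - y') ->
  coset b y = coset b y'.
Proof.
move=> hb y y' hy; apply: funext => z; apply: propext; split.
- case=> t ht ->; exists ((y - y') + t); first exact: idD.
  by rewrite addrA addrCA subrr addr0.
- case=> t ht ->; exists (t - (y - y')); first exact: idB.
  by rewrite opprB addrCA [y + _]addrCA subrr addr0 addrC.
Qed.

Lemma coset_add (b : set R) : is_ideal b -> forall y1 y2,
  coset b (y1 + y2) =
  (fun z => exists p q : R, [/\ coset b y1 p, coset b y2 q & z = p + q]).
Proof.
move=> hb y1 y2; apply: funext => z; apply: propext; split.
- case=> t ht ->; exists (y1 + t), y2; split.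
  + by exists t.
  + by exists 0; [case: hb | rewrite addr0].
  + by rewrite addrAC.
- case=> p [q [[t1 h1 ->] [t2 h2 ->] ->]]; exists (t1 + t2); first exact: idD.
  by rewrite addrACA.
Qed.

Lemma ker_ccan (I : nat -> set R) (b : OI I) y :
  ker_proj b (ccan I y) <-> sval b y.
Proof.
have hb : is_ideal (sval b) := (proj2_sig b).1.
split.
- case=> _ /= E; have : coset (sval b) y y by exists 0; [case: hb|rewrite addr0].
  rewrite /ccan in E; rewrite E /czero; case=> t ht ->; by rewrite add0r.
- move=> hy; split.
  + split=> [bb|bb bb' sub z]; first by exists y.
    by case=> t ht ->; exists t => //; apply: sub.
  + by rewrite /ccan /czero; apply: coset_eq => //; rewrite subr0.
Qed.

End Aux.
Arguments idN {R b} _ {y}.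
Arguments idD {R b} _ {x y}.
Arguments idB {R b} _ {x y}.
Arguments coset_eq {R b}.
Arguments coset_add {R b}.
Arguments ker_ccan {R I}.

Theorem lemma1p30 (A B : comPzRingType) (IA : nat -> set A) (IB : nat -> set B)
    (hA : fundamental_system IA) (hB : fundamental_system IB)
    (hsep : separated IB)
    (h : nat -> {additive A -> B})
    (hpw : pointwise_cvg0 IB (fun n => h n)) :
  let s := sser IB (fun n => h n) in
  (forall a, restricted (s a)) /\
  (forall a a', s (a + a') = sadd (s a) (s a')) /\
  (scontinuous IA s <->
     ((forall n, hcontinuous IA IB (h n)) /\
      continuous_cvg0 IA IB (fun n => h n))).
Proof.
move=> s.
have P1 : forall a, restricted (s a).
  move=> a; split.
  - move=> n; split=> [bb|bb bb' sub z]; first by exists (h n a).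
    by case=> t ht ->; exists t => //; apply: sub.
  - move=> bb; have [n0 Hn0] := hpw a _ (proj2_sig bb).
    by exists n0 => n /Hn0 hn; apply/ker_ccan.
have P2 : forall a a', s (a + a') = sadd (s a) (s a').
  move=> a a'; apply: funext => n; apply: funext => bb.
  rewrite /s /sser /sadd /cadd /ccan raddfD; apply: coset_add.
  exact: (proj2_sig bb).1.
split => //; split => //.
have key : forall a x (b : OI IB) w, (forall n, ker_proj b (w n)) ->
    s (a + x) = sadd (s a) w -> forall n, sval b (h n (a + x) - h n a).
  move=> a x b w Hw E n.
  have hb := (proj2_sig b).1.
  have := f_equal (fun f => f n b (h n (a + x))) E.
  rewrite /sadd /cadd /s /sser /ccan /= => E'.
  have : coset (sval b) (h n (a + x)) (h n (a + x)).
    by exists 0; [case: hb | rewrite addr0].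
  rewrite E'; case=> p [q [[t1 h1 ->]]].
  have [_ /= ->] := Hw n; rewrite /czero /=.
  case=> t2 h2 ->; rewrite add0r => ->; rewrite addrAC [h n a + t1 - _]addrAC subrr add0r; exact: idD.
have hcont : scontinuous IA s -> forall n, hcontinuous IA IB (h n).
  move=> sc n a b' ob'.
  have [aa oaa Haa] := sc a (exist _ b' ob').
  exists aa => // x /Haa [w [_ Hw] E].
  exact: (key a x (exist _ b' ob') w Hw E n).
split.
- move=> sc; have hc := hcont sc; do 2 split => //.
  move=> a b' ob'.
  have [aa oaa Haa] := sc a (exist _ b' ob').
  exists aa => //.
  have [n0 Hn0] := hpw a b' ob'.
  exists n0 => x n hx hn.
  have : b' (h n (a + x) - h n a).
    have [w [_ Hw] E] := Haa x hx.
    exact: (key a x (exist _ b' ob') w Hw E n).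
  move=> H; have := idD ob'.1 H (Hn0 n hn); by rewrite subrK.
- case=> hc [_ hcv] a b.
  set b' := sval b; have ob' : open_ideal IB b' := proj2_sig b.
  have [aa1 [_ [k1 Hk1]] [n0 Hn0]] := hcv a b' ob'.
  have [n1 Hn1] := hpw a b' ob'.
  have loc : forall n, exists k, forall x, IA k x -> b' (h n (a + x) - h n a).
    move=> n; have [aa [_ [k Hk]] Haa] := hc n a b' ob'.
    by exists k => x /Hk /Haa.
  have fin : forall N, exists k, forall x, IA k x ->
      forall n, (n < N)%N -> b' (h n (a + x) - h n a).
    elim=> [|N [k Hk]]; first by exists 0%N.
    have [k' Hk'] := loc N.
    have [k'' Hk''] := hA.2 k k'.
    exists k'' => x /Hk'' [/Hk H1 /Hk' H2] n.
    rewrite ltnS leq_eqVlt => /orP [/eqP -> //|]; exact: H1.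
  have [k Hk] := fin (maxn n0 n1).
  have [k2 Hk2] := hA.2 k k1.
  exists (IA k2).
    by split; [exact: hA.1 | exists k2].
  move=> x hx; exists (s x); last exact: P2.
  split; first exact: P1.
  move=> n; apply/ker_ccan; rewrite -/b'.
  have [/Hk Hx1 /Hk1 Hx2] := Hk2 x hx.
  have -> : h n x = h n (a + x) - h n a by rewrite raddfD addrAC subrr add0r.
  case: (ltnP n (maxn n0 n1)) => hn; first exact: Hx1.
  apply: idB; first exact: ob'.1.
  + apply: Hn0 => //; exact: leq_trans (leq_maxl _ _) hn.
  + apply: Hn1; exact: leq_trans (leq_maxr _ _) hn.
Qed.
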